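(* Let $N=2^\ell$ ($\ell$ a positive integer), $C_2\subseteq C_1\subseteq\mathbb{F}_2^n$ linear codes, $y_x,y_z\in\mathbb{F}_2^n$, and $Q=Q(C_1,C_2,y_x,y_z)$. For $b\in\mathbb{Z}_N^n$ let $b_{y_z}\in\mathbb{Z}_N^n$ be given by $(b_{y_z})_i=b_i$ if $(y_z)_i=0$ and $(b_{y_z})_i=-b_i$ if $(y_z)_i=1$. Then $U(b)$ fixes $Q$ (i.e. $U(b)Q=Q$) if and only if $U(b_{y_z})$ fixes $Q'=Q(C_1,C_2,0,0)$.
   Context: $\omega=e^{2\pi\mathbf{i}/N}$; for $a\in\mathbb{Z}_N$, $U(a)=\mathrm{diag}(1,\omega^a)$ in the computational basis $\{|0\rangle,|1\rangle\}$ of $\mathbb{C}^2$, and $U(b)=\bigotimes_{i=1}^nU(b_i)$ on $(\mathbb{C}^2)^{\otimes n}$. With $X,Z$ the Pauli matrices and $X(u)=\bigotimes X^{u_i}$, $Z(v)=\bigotimes Z^{v_i}$, the CSS code $Q(C_1,C_2,y_x,y_z)$ is the subspace of $(\mathbb{C}^2)^{\otimes n}$ stabilized by all operators $(-1)^{y_x\cdot u+y_z\cdot v}X(u)Z(v)$ with $u\in C_2$, $v\in C_1^\perp$. *)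

(* Defs.v *)
From HB Require Import structures.
From mathcomp Require Import all_boot all_order all_algebra all_field.
Set Implicit Arguments. Unset Strict Implicit. Unset Printing Implicit Defensive.
Import Order.TTheory GRing.Theory Num.Theory.
Local Open Scope ring_scope.

(* omega = e^{2 pi i / N} with N = 2^l (l >= 1): (2^(l-1)).-root (-1) is the
   root of -1 of minimal nonnegative argument, i.e. e^{i pi / 2^(l-1)}. *)
Definition omega (l : nat) : algC := (2 ^ l.-1)%N.-root (-1).

(* Hilbert space (C^2)^{(x) n}: functions on the computational basis {0,1}^n. *)
Notation qstate n := {ffun 'rV['F_2]_n -> algC}.

Definition bit (a : 'F_2) : 'I_2 := if a == 0 then ord0 else ord_max.

(* tensor product  (x)_i A_i  acting on (C^2)^{(x) n}, in the computational basis *)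
Definition tens (n : nat) (A : 'I_n -> 'M[algC]_2) (psi : qstate n) : qstate n :=
  [ffun x : 'rV['F_2]_n => \sum_(y : 'rV['F_2]_n) (\prod_(i < n) A i (bit (x 0 i)) (bit (y 0 i))) * psi y].

Definition Umat (l : nat) (a : 'Z_(2 ^ l)) : 'M[algC]_2 :=
  \matrix_(i, j) (if i == j then (if i == ord0 then 1 else omega l ^+ (val a)) else 0).
Definition Xmat : 'M[algC]_2 := \matrix_(i, j) (if i == j then 0 else 1).
Definition Zmat : 'M[algC]_2 :=
  \matrix_(i, j) (if i == j then (if i == ord0 then 1 else -1) else 0).

Definition Uop (l n : nat) (b : 'rV['Z_(2 ^ l)]_n) : qstate n -> qstate n :=
  tens (fun i => Umat (b 0 i)).
Definition Xop (n : nat) (u : 'rV['F_2]_n) : qstate n -> qstate n :=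
  tens (fun i => Xmat ^+ (val (u 0 i))).
Definition Zop (n : nat) (v : 'rV['F_2]_n) : qstate n -> qstate n :=
  tens (fun i => Zmat ^+ (val (v 0 i))).

Definition dotF2 (n : nat) (u v : 'rV['F_2]_n) : 'F_2 := \sum_(i < n) u 0 i * v 0 i.

Definition dual_code (n : nat) (C : {vspace 'rV['F_2]_n}) : pred 'rV['F_2]_n :=
  fun v => [forall c : 'rV['F_2]_n, (c \in C) ==> (dotF2 v c == 0)].

Definition CSS (n : nat) (C1 C2 : {vspace 'rV['F_2]_n}) (yx yz : 'rV['F_2]_n)
  (psi : qstate n) : Prop :=
  forall u v, u \in C2 -> dual_code C1 v ->
    [ffun x => (-1) ^+ val (dotF2 yx u + dotF2 yz v) * Xop u (Zop v psi) x] = psi.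

Definition fixes (n : nat) (U : qstate n -> qstate n) (Q : qstate n -> Prop) : Prop :=
  forall phi, Q phi <-> exists2 psi, Q psi & U psi = phi.

Definition flip (l n : nat) (b : 'rV['Z_(2 ^ l)]_n) (yz : 'rV['F_2]_n) :
  'rV['Z_(2 ^ l)]_n := \row_i (if yz 0 i == 0 then b 0 i else - b 0 i).

(* Main.v *)
Require Import Defs.
From HB Require Import structures.
From mathcomp Require Import all_boot all_order all_algebra all_field.
From mathcomp Require Import ring.
Import GRing.Theory Num.Theory.
Local Open Scope ring_scope.
Set Implicit Arguments. Unset Strict Implicit. Unset Printing Implicit Defensive.

Lemma F2cases (a : 'F_2) : a = 0 \/ a = 1.
Proof. case: a => [[|[|k]]] //= Hk; [left|right]; exact/val_inj. Qed.
Lemma two0 : (1 + 1 : 'F_2) = 0. Proof. by apply/val_inj. Qed.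
Lemma F2addK (a : 'F_2) : a + a = 0.
Proof. by rewrite -[a]mulr1 -mulrDr two0 mulr0. Qed.

Definition sg (a : 'F_2) : algC := (-1) ^+ val a.
Lemma sg0 : sg 0 = 1. Proof. by []. Qed.
Lemma sgD a b : sg (a + b) = sg a * sg b.
Proof.
by case: (F2cases a) => ->; case: (F2cases b) => ->;
  rewrite /sg /= ?expr0 ?expr1 ?mulr1 ?mul1r ?mulrNN ?mulr1.
Qed.
Lemma sgK a : sg a * sg a = 1.
Proof. by rewrite -sgD F2addK sg0. Qed.
Lemma sg_sum (I : finType) (F : I -> 'F_2) : sg (\sum_i F i) = \prod_i sg (F i).
Proof. exact: (big_morph sg sgD sg0). Qed.

Lemma dotDr n (u v w : 'rV['F_2]_n) : dotF2 u (v + w) = dotF2 u v + dotF2 u w.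
Proof. by rewrite /dotF2 -big_split; apply: eq_bigr => i _; rewrite mxE mulrDr. Qed.
Lemma dotDl n (u v w : 'rV['F_2]_n) : dotF2 (v + w) u = dotF2 v u + dotF2 w u.
Proof. by rewrite /dotF2 -big_split; apply: eq_bigr => i _; rewrite mxE mulrDl. Qed.
Lemma dotC n (u v : 'rV['F_2]_n) : dotF2 u v = dotF2 v u.
Proof. by apply: eq_bigr => i _; rewrite mulrC. Qed.
Lemma dot0l n (u : 'rV['F_2]_n) : dotF2 0 u = 0.
Proof. by rewrite /dotF2 big1 // => i _; rewrite mxE mul0r. Qed.
Lemma rvK n (c : 'rV['F_2]_n) : c + c = 0.
Proof. by apply/matrixP => i j; rewrite !mxE F2addK. Qed.

Lemma bit_eq a b : (bit a == bit b) = (a == b).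
Proof. by case: (F2cases a) => ->; case: (F2cases b) => ->. Qed.

Lemma tensE n (A : 'I_n -> 'M[algC]_2) (c : 'rV['F_2]_n) (w : 'I_n -> 'F_2 -> algC)
  (hA : forall i a b, A i (bit a) (bit b) = (b == a + c 0 i)%:R * w i a) psi x :
  tens A psi x = (\prod_i w i (x 0 i)) * psi (x + c).
Proof.
rewrite /tens ffunE (bigD1 (x + c)) //= [X in _ + X]big1 ?addr0.
  congr (_ * _); apply: eq_bigr => i _.
  by rewrite hA mxE eqxx mul1r.
move=> y hy; have [i hi] : exists i, y 0 i != (x + c) 0 i.
  apply/existsP; rewrite -negb_forall; apply: contra hy => /forallP h.
  by apply/eqP/rowP => i; apply/eqP; exact: h.
have e : (x + c) 0 i = x 0 i + c 0 i by rewrite mxE.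
rewrite (bigD1 i) //= hA -e.
by rewrite (negbTE hi) !mul0r.
Qed.

Definition wU l n (b : 'rV['Z_(2 ^ l)]_n) (i : 'I_n) (a : 'F_2) : algC :=
  if a == 0 then 1 else omega l ^+ val (b 0 i).
Definition phase l n (b : 'rV['Z_(2 ^ l)]_n) (x : 'rV['F_2]_n) : algC :=
  \prod_i wU b i (x 0 i).

Lemma UopE l n (b : 'rV['Z_(2 ^ l)]_n) psi x : Uop b psi x = phase b x * psi x.
Proof.
rewrite /Uop (tensE (c := 0) (w := wU b)) ?addr0 //.
move=> i a a'; rewrite mxE ?addr0 !mxE bit_eq /wU.
by case: (F2cases a) => ->; case: (F2cases a') => -> /=; rewrite ?mulr1 ?mul1r ?mul0r.
Qed.

Lemma XopE n (u : 'rV['F_2]_n) psi x : Xop u psi x = psi (x + u).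
Proof.
rewrite /Xop (tensE (c := u) (w := fun _ _ => 1)) ?big1 ?mul1r // => i a a'.
rewrite mulr1.
by case: (F2cases (u 0 i)) => ->; case: (F2cases a) => ->; case: (F2cases a') => ->;
  rewrite ?expr0 ?expr1 !mxE.
Qed.

Lemma ZopE n (v : 'rV['F_2]_n) psi x : Zop v psi x = sg (dotF2 v x) * psi x.
Proof.
rewrite /Zop (tensE (c := 0) (w := fun i a => sg (v 0 i * a))) ?addr0 ?sg_sum //.
move=> i a a'; rewrite mxE ?addr0.
by case: (F2cases (v 0 i)) => ->; case: (F2cases a) => ->; case: (F2cases a') => ->;
  rewrite ?expr0 ?expr1 !mxE /= ?mul0r ?mulr0 ?mul1r ?mulr1 ?sg0 // /sg /= expr1.
Qed.
Section Abs.
Variables (V : Type) (sc : algC -> V -> V).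
Hypothesis sc_mul : forall a b v, sc a (sc b v) = sc (a * b) v.
Hypothesis sc1 : forall v, sc 1 v = v.

Definition fixesG (U : V -> V) (P : V -> Prop) :=
  forall phi, P phi <-> exists2 psi, P psi & U psi = phi.

Lemma fix_one (P Q : V -> Prop) (U U' M : V -> V) (s k k' : algC)
  (Psc : forall a v, P v -> P (sc a v)) (Qsc : forall a v, Q v -> Q (sc a v))
  (PQ : forall v, P v -> Q (M v)) (QP : forall v, Q v -> P (M v))
  (MM : forall v, M (M v) = sc s v) (sK : s * s = 1)
  (U'sc : forall a v, U' (sc a v) = sc a (U' v))
  (UM : forall v, U (M v) = sc k (M (U' v)))
  (U'M : forall v, U' (M v) = sc k' (M (U v)))
  (k0 : k != 0) (k'0 : k' != 0) :
  fixesG U P -> fixesG U' Q.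
Proof.
move=> F phi; split.
  move=> /QP /F [psi hp hU]; exists (sc (k'^-1 * s) (M psi)); first by apply/Qsc/PQ.
  rewrite U'sc U'M hU MM !sc_mul -[RHS]sc1; congr sc.
  by rewrite -(mulrA k'^-1) (mulrC s k') mulrA mulVf // mul1r sK.
case=> psi /QP /(fun h => (F (U (M psi))).2 (ex_intro2 _ _ _ h erefl)).
rewrite UM => /(Psc k^-1); rewrite sc_mul mulVf // sc1 => /PQ; rewrite MM => /(Qsc s).
by rewrite sc_mul sK sc1 => + <-.
Qed.

Lemma UM_sym (U U' M : V -> V) (s k : algC)
  (MM : forall v, M (M v) = sc s v) (sK : s * s = 1)
  (Usc : forall a v, U (sc a v) = sc a (U v))
  (Msc : forall a v, M (sc a v) = sc a (M v))
  (UM : forall v, U (M v) = sc k (M (U' v))) (k0 : k != 0) :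
  forall v, U' (M v) = sc k^-1 (M (U v)).
Proof.
move=> v.
have -> : U v = sc s (U (M (M v))) by rewrite MM Usc sc_mul sK sc1.
rewrite UM Msc Msc MM !sc_mul -[LHS]sc1; congr sc.
by rewrite -(mulrA k^-1) (mulrC s k) mulrA mulVf // mul1r sK.
Qed.
End Abs.

Lemma two_gt1 l : (0 < l)%N -> (1 < 2 ^ l)%N.
Proof. by move=> hl; rewrite -[1%N](expn0 2) ltn_exp2l. Qed.

Lemma omegaN l : (0 < l)%N -> omega l ^+ (2 ^ l) = 1.
Proof.
move=> hl; rewrite /omega.
have -> : (2 ^ l = 2 ^ l.-1 * 2)%N by rewrite -expnSr prednK.
by rewrite exprM rootCK ?expn_gt0 // expr2 mulrNN mulr1.
Qed.

Lemma omegaD l (hl : (0 < l)%N) (a c : 'Z_(2 ^ l)) :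
  omega l ^+ val (a + c) = omega l ^+ val a * omega l ^+ val c.
Proof.
rewrite -exprD.
have -> : val (a + c) = ((val a + val c) %% (Zp_trunc (2 ^ l)).+2)%N by [].
by rewrite expr_mod // Zp_cast ?two_gt1 // omegaN.
Qed.

Lemma phase_rel l (hl : (0 < l)%N) n (b : 'rV['Z_(2 ^ l)]_n) (c x : 'rV['F_2]_n) :
  phase b x = phase b c * phase (flip b c) (x + c).
Proof.
rewrite /phase -big_split; apply: eq_bigr => i _ /=.
rewrite /wU !mxE.
case: (F2cases (c 0 i)) => ->; case: (F2cases (x 0 i)) => -> //;
  rewrite ?mul1r ?mulr1 //.
by rewrite -omegaD // addrN expr0.
Qed.

Definition scl n (k : algC) (psi : qstate n) : qstate n := [ffun x => k * psi x].
Definition Mop n (a c : 'rV['F_2]_n) (psi : qstate n) : qstate n :=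
  [ffun x => sg (dotF2 a x) * psi (x + c)].

Lemma scl_mul n a b (v : qstate n) : scl a (scl b v) = scl (a * b) v.
Proof. by apply/ffunP => x; rewrite !ffunE mulrA. Qed.
Lemma scl1 n (v : qstate n) : scl 1 v = v.
Proof. by apply/ffunP => x; rewrite !ffunE mul1r. Qed.

Lemma CSSE n C1 C2 (yx yz : 'rV['F_2]_n) psi :
  CSS C1 C2 yx yz psi <-> forall u v, u \in C2 -> dual_code C1 v -> forall x,
   sg (dotF2 yx u + dotF2 yz v) * (sg (dotF2 v (x + u)) * psi (x + u)) = psi x.
Proof.
split.
  move=> h u v hu hv x; move/ffunP/(_ x): (h u v hu hv).
  by rewrite ffunE XopE ZopE.
move=> h u v hu hv; apply/ffunP => x.
by rewrite ffunE XopE ZopE h.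
Qed.

Lemma CSS_scl n C1 C2 (yx yz : 'rV['F_2]_n) k psi :
  CSS C1 C2 yx yz psi -> CSS C1 C2 yx yz (scl k psi).
Proof.
move=> /CSSE h; apply/CSSE => u v hu hv x.
by rewrite !ffunE -(h u v hu hv x) !mulrA [_ * k]mulrC -!mulrA; congr (_ * _);
  rewrite !mulrA [_ * k]mulrC.
Qed.

Lemma CSS_shift n C1 C2 (yx yz a c : 'rV['F_2]_n) psi :
  CSS C1 C2 yx yz psi -> CSS C1 C2 (yx + a) (yz + c) (Mop a c psi).
Proof.
move=> /CSSE h; apply/CSSE => u v hu hv x.
rewrite !ffunE -(h u v hu hv (x + c)).
rewrite [x + u + c]addrAC !mulrA -!sgD; congr (sg _ * _).
rewrite !dotDr !dotDl (dotC v c).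
apply/eqP; rewrite -subr_eq0; apply/eqP.
transitivity ((1 + 1) * dotF2 a u); last by rewrite two0 mul0r.
ring.
Qed.


Lemma sclE n k (v : qstate n) x : scl k v x = k * v x.
Proof. by rewrite ffunE. Qed.
Lemma MopE n (a c : 'rV['F_2]_n) v x : Mop a c v x = sg (dotF2 a x) * v (x + c).
Proof. by rewrite ffunE. Qed.

Lemma MopK n (a c : 'rV['F_2]_n) v : Mop a c (Mop a c v) = scl (sg (dotF2 a c)) v.
Proof.
apply/ffunP => x; rewrite !ffunE -addrA rvK addr0 dotDr sgD !mulrA.
by rewrite [sg (dotF2 a x) * _]mulrC -mulrA mulrA sgK mul1r. 
Qed.

Lemma Mop_scl n (a c : 'rV['F_2]_n) k v : Mop a c (scl k v) = scl k (Mop a c v).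
Proof. by apply/ffunP => x; rewrite !ffunE mulrCA. Qed.

Lemma Uop_scl l n (b : 'rV['Z_(2 ^ l)]_n) k v : Uop b (scl k v) = scl k (Uop b v).
Proof. by apply/ffunP => x; rewrite UopE !sclE UopE mulrCA. Qed.

Lemma UopM l (hl : (0 < l)%N) n (b : 'rV['Z_(2 ^ l)]_n) a c v :
  Uop b (Mop a c v) = scl (phase b c) (Mop a c (Uop (flip b c) v)).
Proof.
apply/ffunP => x; rewrite UopE sclE !MopE UopE (phase_rel hl b c x).
ring.
Qed.

Lemma phase_neq0 l (hl : (0 < l)%N) n (b : 'rV['Z_(2 ^ l)]_n) c : phase b c != 0.
Proof.
rewrite prodf_seq_neq0; apply/allP => i _ /=; rewrite /wU.
case: ifP => _; first exact: oner_neq0.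
apply: expf_neq0; apply/eqP => h0; have := omegaN hl.
by rewrite h0 expr0n expn_eq0 /= => /eqP; rewrite eq_sym oner_eq0.
Qed.

Unset Implicit Arguments.
Theorem proposition2p7 (l n : nat) (hl : (0 < l)%N)
  (C1 C2 : {vspace 'rV['F_2]_n}) (hC : (C2 <= C1)%VS)
  (yx yz : 'rV['F_2]_n) (b : 'rV['Z_(2 ^ l)]_n) :
  fixes (Uop b) (CSS C1 C2 yx yz) <-> fixes (Uop (flip b yz)) (CSS C1 C2 0 0).
Proof.
have k0 := phase_neq0 hl b yz.
have QQ' : forall v, CSS C1 C2 yx yz v -> CSS C1 C2 0 0 (Mop yx yz v).
  by move=> v /(CSS_shift yx yz); rewrite !rvK.
have Q'Q : forall v, CSS C1 C2 0 0 v -> CSS C1 C2 yx yz (Mop yx yz v).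
  by move=> v /(CSS_shift yx yz); rewrite !add0r.
have UM := UopM hl b yx yz.
have U'M := UM_sym (@scl_mul n) (@scl1 n) (@MopK n yx yz) (sgK _)
   (@Uop_scl l n b) (@Mop_scl n yx yz) UM k0.
split.
  apply: (fix_one (@scl_mul n) (@scl1 n) (@CSS_scl n C1 C2 yx yz) (@CSS_scl n C1 C2 0 0)
    QQ' Q'Q (@MopK n yx yz) (sgK _) (@Uop_scl l n _) UM U'M k0).
  by rewrite invr_eq0.
apply: (fix_one (@scl_mul n) (@scl1 n) (@CSS_scl n C1 C2 0 0) (@CSS_scl n C1 C2 yx yz)
    Q'Q QQ' (@MopK n yx yz) (sgK _) (@Uop_scl l n _) U'M UM _ k0).
by rewrite invr_eq0.
Qed.
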